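(* Let $\mathbb{E}$ be a finitely complete category, $\Sigma$ a point-congruous class of split epimorphisms, and suppose $\mathbb{E}$ is a $\Sigma$-Mal'tsev category. For every object $Y$, the full subcategory $\Sigma l_Y(\mathbb{E})$ of the slice category $\mathbb{E}/Y$ whose objects are the $\Sigma$-special morphisms with codomain $Y$ is a Mal'tsev category, i.e. every reflexive relation in $\Sigma l_Y(\mathbb{E})$ is an equivalence relation.
   Context: A split epimorphism is a pair $(f,s)$ with $fs=1$. A class $\Sigma$ of split epimorphisms is fibrational if it contains all split epimorphisms $(f,s)$ with $f$ invertible and is stable under pullback along any morphism; it is point-congruous if moreover the full subcategory $\Sigma(\mathbb{E})$ of the category $\mathrm{Pt}(\mathbb{E})$ of split epimorphisms (with commuting squares as morphisms) is closed under finite limits in $\mathrm{Pt}(\mathbb{E})$. A pair of morphisms with common codomain $W$ is jointly extremally epic if it factors jointly through no non-invertible monomorphism into $W$. $\mathbb{E}$ is $\Sigma$-Mal'tsev if for every split epimorphism $(f,s)\colon X\rightleftarrows Y$ in $\Sigma$ and every split epimorphism $(g,t)$ with $g\colon Y'\to Y$, letting $X'=Y'\times_YX$, $s'=(1_{Y'},sg)$, $\bar t=(tf,1_X)$, the pair $(s',\bar t)$ is jointly extremally epic. A $\Sigma$-relation is a reflexive relation $(d_0,d_1)\colon S\rightarrowtail X\times X$ with reflexivity $s_0$ such that $(d_0,s_0)\in\Sigma$. A morphism $f$ is $\Sigma$-special when its kernel relation $R[f]$ is a $\Sigma$-relation. *)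

(* Defs.v *)
From Stdlib Require Import ProofIrrelevance FinFun.

Set Implicit Arguments.
Unset Strict Implicit.

Record Category := {
  Ob :> Type;
  Hom : Ob -> Ob -> Type;
  idm : forall X, Hom X X;
  comp : forall X Y Z, Hom Y Z -> Hom X Y -> Hom X Z;   (* comp g f = g o f *)
  comp_id_l : forall X Y (f : Hom X Y), comp (idm Y) f = f;
  comp_id_r : forall X Y (f : Hom X Y), comp f (idm X) = f;
  comp_assoc : forall X Y Z W (h : Hom Z W) (g : Hom Y Z) (f : Hom X Y),
      comp h (comp g f) = comp (comp h g) f
}.

Arguments Hom {c} _ _.
Arguments idm {c} _.
Arguments comp {c X Y Z} _ _.

Declare Scope cat_scope.
Notation "g ∘ f" := (comp g f) (at level 40, left associativity) : cat_scope.
Notation "1_ X" := (idm X) (at level 0, X at level 0) : cat_scope.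
Open Scope cat_scope.

Section Basic.
Variable C : Category.

Definition is_mono {X Y : C} (m : Hom X Y) : Prop :=
  forall T (a b : Hom T X), m ∘ a = m ∘ b -> a = b.

Definition is_iso {X Y : C} (f : Hom X Y) : Prop :=
  exists g : Hom Y X, g ∘ f = 1_X /\ f ∘ g = 1_Y.

Definition is_pullback {X Y Y' P : C} (f : Hom X Y) (h : Hom Y' Y)
    (p1 : Hom P Y') (p2 : Hom P X) : Prop :=
  f ∘ p2 = h ∘ p1 /\
  forall T (a : Hom T Y') (b : Hom T X), f ∘ b = h ∘ a ->
    exists u : Hom T P, (p1 ∘ u = a /\ p2 ∘ u = b) /\
      forall u' : Hom T P, p1 ∘ u' = a -> p2 ∘ u' = b -> u' = u.

Record fgraph := {
  gV : Type; gE : Type;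
  gV_fin : Finite gV; gE_fin : Finite gE;
  gsrc : gE -> gV; gtgt : gE -> gV
}.

Record diagram (G : fgraph) := {
  dobj : gV G -> C;
  darr : forall e : gE G, Hom (dobj (gsrc e)) (dobj (gtgt e))
}.

Record cone (G : fgraph) (D : diagram G) := {
  apex : C;
  leg : forall v : gV G, Hom apex (dobj D v);
  leg_comm : forall e : gE G, darr D e ∘ leg (gsrc e) = leg (gtgt e)
}.

Definition is_limit (G : fgraph) (D : diagram G) (L : cone D) : Prop :=
  forall K : cone D,
    exists u : Hom (apex K) (apex L),
      (forall v, leg L v ∘ u = leg K v) /\
      forall u' : Hom (apex K) (apex L),
        (forall v, leg L v ∘ u' = leg K v) -> u' = u.

Definition finitely_complete : Prop :=
  forall (G : fgraph) (D : diagram G), exists L : cone D, is_limit L.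

Definition closed_under_finite_limits (P : C -> Prop) : Prop :=
  forall (G : fgraph) (D : diagram G), (forall v, P (dobj D v)) ->
    forall L : cone D, is_limit L -> P (apex L).

(* Relations and Mal'tsev categories (via generalized elements). *)
Definition jointly_monic {R X : C} (d0 d1 : Hom R X) : Prop :=
  forall T (a b : Hom T R), d0 ∘ a = d0 ∘ b -> d1 ∘ a = d1 ∘ b -> a = b.

Definition is_relation {R X : C} (d0 d1 : Hom R X) : Prop := jointly_monic d0 d1.

Definition rel_reflexive {R X : C} (d0 d1 : Hom R X) : Prop :=
  exists s0 : Hom X R, d0 ∘ s0 = 1_X /\ d1 ∘ s0 = 1_X.

Definition rel_symmetric {R X : C} (d0 d1 : Hom R X) : Prop :=
  forall T (r : Hom T R), exists r' : Hom T R, d0 ∘ r' = d1 ∘ r /\ d1 ∘ r' = d0 ∘ r.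

Definition rel_transitive {R X : C} (d0 d1 : Hom R X) : Prop :=
  forall T (r1 r2 : Hom T R), d1 ∘ r1 = d0 ∘ r2 ->
    exists r3 : Hom T R, d0 ∘ r3 = d0 ∘ r1 /\ d1 ∘ r3 = d1 ∘ r2.

Definition rel_equivalence {R X : C} (d0 d1 : Hom R X) : Prop :=
  rel_reflexive d0 d1 /\ rel_symmetric d0 d1 /\ rel_transitive d0 d1.

Definition Maltsev : Prop :=
  forall (R X : C) (d0 d1 : Hom R X),
    is_relation d0 d1 -> rel_reflexive d0 d1 -> rel_equivalence d0 d1.

End Basic.

Arguments fgraph : clear implicits.

Section FullSub.
Variable C : Category.
Variable P : C -> Prop.

Definition fs_ob := { X : C | P X }.
Definition fs_hom (A B : fs_ob) := Hom (proj1_sig A) (proj1_sig B).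

Definition FullSub : Category.
Proof.
  refine {| Ob := fs_ob; Hom := fs_hom;
            idm := fun A => 1_(proj1_sig A);
            comp := fun A B D (g : fs_hom B D) (f : fs_hom A B) => g ∘ f |}.
  - intros; apply comp_id_l.
  - intros; apply comp_id_r.
  - intros; apply comp_assoc.
Defined.
End FullSub.

Section Slice.
Variable C : Category.
Variable Y : C.

Definition sl_ob := { X : C & Hom X Y }.
Record sl_hom (A B : sl_ob) := {
  sl_map : Hom (projT1 A) (projT1 B);
  sl_comm : projT2 B ∘ sl_map = projT2 A
}.

Lemma sl_hom_eq (A B : sl_ob) (h k : sl_hom A B) : sl_map h = sl_map k -> h = k.
Proof.
  destruct h as [h hc], k as [k kc]; simpl; intros ->.
  f_equal; apply proof_irrelevance.
Qed.

Definition sl_id (A : sl_ob) : sl_hom A A.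
Proof. refine {| sl_map := 1_(projT1 A) |}; apply comp_id_r. Defined.

Definition sl_comp (A B D : sl_ob) (g : sl_hom B D) (f : sl_hom A B) : sl_hom A D.
Proof.
  refine {| sl_map := sl_map g ∘ sl_map f |}.
  rewrite comp_assoc, (sl_comm g); apply (sl_comm f).
Defined.

Definition Slice : Category.
Proof.
  refine {| Ob := sl_ob; Hom := sl_hom; idm := sl_id; comp := sl_comp |}.
  - intros; apply sl_hom_eq; simpl; apply comp_id_l.
  - intros; apply sl_hom_eq; simpl; apply comp_id_r.
  - intros; apply sl_hom_eq; simpl; apply comp_assoc.
Defined.
End Slice.

Section Points.
Variable C : Category.

Record pt_ob := {
  ptX : C; ptY : C;
  ptf : Hom ptX ptY; pts : Hom ptY ptX;
  pt_split : ptf ∘ pts = 1_ptY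
}.

Record pt_hom (p q : pt_ob) := {
  phx : Hom (ptX p) (ptX q);
  phy : Hom (ptY p) (ptY q);
  ph_f : ptf q ∘ phx = phy ∘ ptf p;
  ph_s : phx ∘ pts p = pts q ∘ phy
}.

Lemma pt_hom_eq (p q : pt_ob) (h k : pt_hom p q) :
  phx h = phx k -> phy h = phy k -> h = k.
Proof.
  destruct h as [hx hy h1 h2], k as [kx ky k1 k2]; simpl; intros -> ->.
  f_equal; apply proof_irrelevance.
Qed.

Definition pt_id (p : pt_ob) : pt_hom p p.
Proof.
  refine {| phx := 1_(ptX p); phy := 1_(ptY p) |};
    rewrite comp_id_l, comp_id_r; reflexivity.
Defined.

Definition pt_comp (p q r : pt_ob) (g : pt_hom q r) (f : pt_hom p q) : pt_hom p r.
Proof.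
  refine {| phx := phx g ∘ phx f; phy := phy g ∘ phy f |}.
  - rewrite comp_assoc, (ph_f g), <- comp_assoc, (ph_f f), comp_assoc; reflexivity.
  - rewrite <- comp_assoc, (ph_s f), comp_assoc, (ph_s g), <- comp_assoc; reflexivity.
Defined.

Definition Pt : Category.
Proof.
  refine {| Ob := pt_ob; Hom := pt_hom; idm := pt_id; comp := pt_comp |};
    intros; apply pt_hom_eq; simpl;
    first [apply comp_id_l | apply comp_id_r | apply comp_assoc].
Defined.
End Points.

Section SigmaNotions.
Variable C : Category.

Definition split_class := forall X Y : C, Hom X Y -> Hom Y X -> Prop.

Variable Sigma : split_class.

Definition is_class_of_split_epis : Prop :=
  forall (X Y : C) (f : Hom X Y) (s : Hom Y X), Sigma f s -> f ∘ s = 1_Y.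

Definition fibrational : Prop :=
  (forall (X Y : C) (f : Hom X Y) (s : Hom Y X),
      f ∘ s = 1_Y -> is_iso f -> Sigma f s) /\
  (forall (X Y : C) (f : Hom X Y) (s : Hom Y X), Sigma f s ->
     forall (Y' P : C) (h : Hom Y' Y) (p1 : Hom P Y') (p2 : Hom P X),
       is_pullback f h p1 p2 ->
       forall s' : Hom Y' P, p1 ∘ s' = 1_Y' -> p2 ∘ s' = s ∘ h ->
         Sigma p1 s').

Definition SigmaPt (p : Pt C) : Prop := Sigma (ptf p) (pts p).

Definition point_congruous : Prop :=
  fibrational /\ closed_under_finite_limits (SigmaPt).

Definition jointly_extremally_epic {A B W : C} (u : Hom A W) (v : Hom B W) : Prop :=
  forall (M : C) (m : Hom M W), is_mono m ->
    forall (u' : Hom A M) (v' : Hom B M), m ∘ u' = u -> m ∘ v' = v -> is_iso m.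

(* E is Sigma-Mal'tsev.  X' = Y' x_Y X with projections p1 : X' -> Y',
   p2 : X' -> X;  s' = (1_Y', s g),  tbar = (t f, 1_X). *)
Definition Sigma_Maltsev : Prop :=
  forall (X Y : C) (f : Hom X Y) (s : Hom Y X), Sigma f s ->
  forall (Y' : C) (g : Hom Y' Y) (t : Hom Y Y'), g ∘ t = 1_Y ->
  forall (X' : C) (p1 : Hom X' Y') (p2 : Hom X' X), is_pullback f g p1 p2 ->
  forall (s' : Hom Y' X') (tbar : Hom X X'),
    p1 ∘ s' = 1_Y' -> p2 ∘ s' = s ∘ g ->
    p1 ∘ tbar = t ∘ f -> p2 ∘ tbar = 1_X ->
    jointly_extremally_epic s' tbar.

Definition Sigma_relation {S X : C} (d0 d1 : Hom S X) (s0 : Hom X S) : Prop :=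
  is_relation d0 d1 /\ d0 ∘ s0 = 1_X /\ d1 ∘ s0 = 1_X /\ Sigma d0 s0.

Definition Sigma_special {X Y : C} (f : Hom X Y) : Prop :=
  forall (R : C) (p0 p1 : Hom R X), is_pullback f f p0 p1 ->
  forall s0 : Hom X R, p0 ∘ s0 = 1_X -> p1 ∘ s0 = 1_X ->
    Sigma_relation p0 p1 s0.

Definition SigmaSpecialSlice (Y : C) : Category :=
  FullSub (fun A : Slice Y => Sigma_special (projT2 A)).

End SigmaNotions.

(* Main.v *)
Require Import Defs.
From Stdlib Require Import ProofIrrelevance FinFun List.
Import ListNotations.
Set Implicit Arguments.
Unset Strict Implicit.


Ltac ra := repeat (rewrite <- comp_assoc || rewrite comp_id_l || rewrite comp_id_r).
Ltac raH H := repeat (rewrite <- comp_assoc in H || rewrite comp_id_l in H || rewrite comp_id_r in H).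

Lemma cmp_r (C : Category) (X Y Z W : C) (a : Hom Y Z) (b : Hom X Y) (c : Hom X Z) :
  a ∘ b = c -> forall (z : Hom W X), a ∘ (b ∘ z) = c ∘ z.
Proof. intros H z; rewrite comp_assoc, H; reflexivity. Qed.

Ltac crw H := ra; first [rewrite !(cmp_r H) | rewrite !H]; ra.
Ltac crwb H := ra; first [rewrite !(cmp_r (eq_sym H)) | rewrite <- !H]; ra.


Lemma pb_unique (C : Category) {X Y Y' P : C} (f : Hom X Y) (h : Hom Y' Y) p1 p2 :
  @is_pullback C X Y Y' P f h p1 p2 -> forall T (u u' : Hom T P),
  p1 ∘ u = p1 ∘ u' -> p2 ∘ u = p2 ∘ u' -> u = u'.
Proof.
  intros [Hc Hu] T u u' E1 E2.
  destruct (Hu T (p1 ∘ u) (p2 ∘ u)) as [w [_ Hw]].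
  { rewrite !comp_assoc, Hc; reflexivity. }
  rewrite (Hw u), (Hw u'); auto.
Qed.

Lemma pb_lift (C : Category) {X Y Y' P : C} (f : Hom X Y) (h : Hom Y' Y) p1 p2 :
  @is_pullback C X Y Y' P f h p1 p2 -> forall T a b, f ∘ b = h ∘ a ->
  exists u : Hom T P, p1 ∘ u = a /\ p2 ∘ u = b.
Proof. intros [_ Hu] T a b E. destruct (Hu T a b E) as [w [H _]]; eauto. Qed.

Lemma pb_id (C : Category) (X : C) : is_pullback (1_X) (1_X) (1_X) (1_X).
Proof.
  split; [reflexivity|]. intros T a b E. raH E. subst. exists a. ra.
  split; [split; reflexivity|]. intros u' H1 _. raH H1. exact H1.
Qed.

Inductive V4 := vA | vB | vC0 | vC1.
Inductive E4 := e0a | e1a | e0b | e1b.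
Definition g4src (e : E4) : V4 := match e with e0a | e1a => vA | _ => vB end.
Definition g4tgt (e : E4) : V4 := match e with e0a | e0b => vC0 | _ => vC1 end.
Lemma V4_fin : Finite V4. Proof. exists [vA;vB;vC0;vC1]; intros []; simpl; tauto. Qed.
Lemma E4_fin : Finite E4. Proof. exists [e0a;e1a;e0b;e1b]; intros []; simpl; tauto. Qed.
Definition G4 : fgraph := {| gV := V4; gE := E4; gV_fin := V4_fin; gE_fin := E4_fin;
  gsrc := g4src; gtgt := g4tgt |}.

Definition d4obj (C : Category) (oA oB oC0 oC1 : C) (v : V4) : C :=
  match v with vA => oA | vB => oB | vC0 => oC0 | vC1 => oC1 end.

Definition d4 (C : Category) (oA oB oC0 oC1 : C) (a0 : Hom oA oC0) (a1 : Hom oA oC1)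
  (b0 : Hom oB oC0) (b1 : Hom oB oC1) : diagram C G4.
Proof.
  refine {| dobj := d4obj oA oB oC0 oC1 : gV G4 -> C |}.
  intros e; destruct e; simpl; assumption.
Defined.

Definition d4cone (C : Category) (oA oB oC0 oC1 : C) (a0 : Hom oA oC0) (a1 : Hom oA oC1)
  (b0 : Hom oB oC0) (b1 : Hom oB oC1) (T : C) (u : Hom T oA) (v : Hom T oB)
  (H0 : b0 ∘ v = a0 ∘ u) (H1 : b1 ∘ v = a1 ∘ u) : cone (d4 a0 a1 b0 b1).
Proof.
  refine (@Build_cone C G4 (d4 a0 a1 b0 b1) T
    (fun w => match w return Hom T (d4obj oA oB oC0 oC1 w) with
              vA => u | vB => v | vC0 => a0 ∘ u | vC1 => a1 ∘ u end) _).
  intros e; destruct e; simpl; auto.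
Defined.

Definition is_dpb (C : Category) (L A B C0 C1 : C) (a0 : Hom A C0) (a1 : Hom A C1)
  (b0 : Hom B C0) (b1 : Hom B C1) (la : Hom L A) (lb : Hom L B) : Prop :=
  a0 ∘ la = b0 ∘ lb /\ a1 ∘ la = b1 ∘ lb /\
  forall T (u : Hom T A) (v : Hom T B), a0 ∘ u = b0 ∘ v -> a1 ∘ u = b1 ∘ v ->
    exists w, (la ∘ w = u /\ lb ∘ w = v) /\
      forall w', la ∘ w' = u -> lb ∘ w' = v -> w' = w.

Lemma dpb_exists (C : Category) : finitely_complete C ->
  forall (A B C0 C1 : C) (a0 : Hom A C0) (a1 : Hom A C1) (b0 : Hom B C0) (b1 : Hom B C1),
  exists L la lb, @is_dpb C L A B C0 C1 a0 a1 b0 b1 la lb.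
Proof.
  intros HC A B C0 C1 a0 a1 b0 b1.
  destruct (HC G4 (d4 a0 a1 b0 b1)) as [L HL].
  exists (apex L), (leg L vA), (leg L vB).
  pose proof (leg_comm L e0a) as E0. pose proof (leg_comm L e0b) as E0'.
  pose proof (leg_comm L e1a) as E1. pose proof (leg_comm L e1b) as E1'.
  simpl in *.
  split; [rewrite E0, E0'; reflexivity|].
  split; [rewrite E1, E1'; reflexivity|].
  intros T u v H0 H1.
  destruct (HL (d4cone (eq_sym H0) (eq_sym H1))) as [w [Hw Hu]].
  exists w. split.
  - split; [apply (Hw vA) | apply (Hw vB)].
  - intros w' Ha Hb. apply Hu. intros []; simpl; auto.
    + rewrite <- E0, <- comp_assoc, Ha; reflexivity.
    + rewrite <- E1, <- comp_assoc, Ha; reflexivity.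
Qed.

Lemma pb_exists (C : Category) : finitely_complete C ->
  forall (X Y Y' : C) (f : Hom X Y) (h : Hom Y' Y), exists P p1 p2, @is_pullback C X Y Y' P f h p1 p2.
Proof.
  intros HC X Y Y' f h.
  destruct (dpb_exists HC h h f f) as [L [la [lb [E0 [_ Hu]]]]].
  exists L, la, lb. split; [auto|].
  intros T a b E. destruct (Hu T a b (eq_sym E) (eq_sym E)) as [w [Hw Hw']].
  exists w; split; auto.
Qed.


Lemma ptpb (E : Category) (Sigma : split_class E) (HPC : point_congruous Sigma)
  (A B Cp D : pt_ob E) (al : pt_hom A Cp) (be : pt_hom B Cp) (da : pt_hom D A) (db : pt_hom D B) :
  SigmaPt Sigma A -> SigmaPt Sigma B -> SigmaPt Sigma Cp ->
  is_pullback (phx al) (phx be) (phx db) (phx da) ->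
  is_pullback (phy al) (phy be) (phy db) (phy da) ->
  SigmaPt Sigma D.
Proof.
  intros SA SB SC Htop Hbot.
  destruct HPC as [_ Hcl].
  assert (Hcomm : (al : Hom (c:=Pt E) A Cp) ∘ da = (be : Hom (c:=Pt E) B Cp) ∘ db).
  { apply pt_hom_eq; simpl; [apply (proj1 Htop) | apply (proj1 Hbot)]. }
  pose (Dg := d4 (C:=Pt E) al al be be).
  pose (L := d4cone (C:=Pt E) (a0:=al) (a1:=al) (b0:=be) (b1:=be) (u:=da) (v:=db) (eq_sym Hcomm) (eq_sym Hcomm)).
  change (SigmaPt Sigma (apex L)). apply (Hcl G4 Dg); [intros []; simpl; assumption|].
  intros K.
  pose (kA := leg K vA : pt_hom (apex K) A). pose (kB := leg K vB : pt_hom (apex K) B).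
  pose proof (leg_comm K e0a) as K0. pose proof (leg_comm K e0b) as K0'.
  pose proof (leg_comm K e1a) as K1.
  simpl in K0, K0', K1. fold kA in K0, K1. fold kB in K0'.
  assert (Ex : phx al ∘ phx kA = phx be ∘ phx kB).
  { pose proof (f_equal (@phx E _ _) K0) as X0. pose proof (f_equal (@phx E _ _) K0') as X1.
    simpl in X0, X1. rewrite X0, X1; reflexivity. }
  assert (Ey : phy al ∘ phy kA = phy be ∘ phy kB).
  { pose proof (f_equal (@phy E _ _) K0) as X0. pose proof (f_equal (@phy E _ _) K0') as X1.
    simpl in X0, X1. rewrite X0, X1; reflexivity. }
  destruct (pb_lift Htop Ex) as [ux [Ux1 Ux2]].
  destruct (pb_lift Hbot Ey) as [uy [Uy1 Uy2]].
  assert (Hf : ptf D ∘ ux = uy ∘ ptf (apex K)).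
  { apply (pb_unique Hbot).
    - rewrite comp_assoc, <- (ph_f db), <- comp_assoc, Ux1, (ph_f kB).
      rewrite comp_assoc, Uy1; reflexivity.
    - rewrite comp_assoc, <- (ph_f da), <- comp_assoc, Ux2, (ph_f kA).
      rewrite comp_assoc, Uy2; reflexivity. }
  assert (Hs : ux ∘ pts (apex K) = pts D ∘ uy).
  { apply (pb_unique Htop).
    - rewrite comp_assoc, Ux1, (ph_s kB).
      rewrite comp_assoc, (ph_s db), <- comp_assoc, Uy1; reflexivity.
    - rewrite comp_assoc, Ux2, (ph_s kA).
      rewrite comp_assoc, (ph_s da), <- comp_assoc, Uy2; reflexivity. }
  exists (Build_pt_hom Hf Hs). split.
  - intros []; simpl; apply pt_hom_eq; simpl.
    + exact Ux2.
    + exact Uy2.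
    + exact Ux1.
    + exact Uy1.
    + rewrite <- comp_assoc, Ux2. exact (f_equal (@phx E _ _) K0).
    + rewrite <- comp_assoc, Uy2. exact (f_equal (@phy E _ _) K0).
    + rewrite <- comp_assoc, Ux2. exact (f_equal (@phx E _ _) K1).
    + rewrite <- comp_assoc, Uy2. exact (f_equal (@phy E _ _) K1).
  - intros u' Hu'. apply pt_hom_eq; simpl.
    + apply (pb_unique Htop).
      * rewrite Ux1. exact (f_equal (@phx _ _ _) (Hu' vB)).
      * rewrite Ux2. exact (f_equal (@phx _ _ _) (Hu' vA)).
    + apply (pb_unique Hbot).
      * rewrite Uy1. exact (f_equal (@phy _ _ _) (Hu' vB)).
      * rewrite Uy2. exact (f_equal (@phy _ _ _) (Hu' vA)).
Qed.


Lemma sp_kp (E : Category) (Sigma : split_class E) {X Y : E} (x : Hom X Y) :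
  Sigma_special Sigma x -> forall K (k0 k1 : Hom K X), is_pullback x x k0 k1 ->
  forall d, k0 ∘ d = 1_X -> k1 ∘ d = 1_X -> Sigma _ _ k0 d.
Proof. intros S K k0 k1 H d H0 H1. exact (proj2 (proj2 (proj2 (S K k0 k1 H d H0 H1)))). Qed.

Lemma kp_exists (E : Category) : finitely_complete E -> forall {X Y : E} (x : Hom X Y),
  exists K (k0 k1 : Hom K X) d, is_pullback x x k0 k1 /\ k0 ∘ d = 1_X /\ k1 ∘ d = 1_X.
Proof.
  intros HC X Y x. destruct (pb_exists HC x x) as [K [k0 [k1 H]]].
  destruct (pb_lift H (a:=1_X) (b:=1_X) eq_refl) as [d [D0 D1]].
  exists K, k0, k1, d; auto.
Qed.

Lemma sp_pullback (E : Category) (Sigma : split_class E) (HC : finitely_complete E)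
  (HPC : point_congruous Sigma)
  {A B Cc Y : E} (a : Hom A Y) (b : Hom B Y) (c : Hom Cc Y) (f : Hom A Cc) (g : Hom B Cc) :
  Sigma_special Sigma a -> Sigma_special Sigma b -> Sigma_special Sigma c ->
  c ∘ f = a -> c ∘ g = b ->
  forall P (p1 : Hom P B) (p2 : Hom P A), is_pullback f g p1 p2 ->
  Sigma_special Sigma (a ∘ p2).
Proof.
  intros SA SB SC Hf Hg P p1 p2 HP KP q0 q1 HKP s Hs0 Hs1.
  split; [intros T u v E0 E1; exact (pb_unique HKP E0 E1)|].
  split; [exact Hs0|]. split; [exact Hs1|].
  destruct (kp_exists HC a) as [KA [ka0 [ka1 [dA [HKA [DA0 DA1]]]]]].
  destruct (kp_exists HC b) as [KB [kb0 [kb1 [dB [HKB [DB0 DB1]]]]]].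
  destruct (kp_exists HC c) as [KC [kc0 [kc1 [dC [HKC [DC0 DC1]]]]]].
  pose proof (sp_kp SA HKA DA0 DA1) as SgA.
  pose proof (sp_kp SB HKB DB0 DB1) as SgB.
  pose proof (sp_kp SC HKC DC0 DC1) as SgC.
  pose proof (proj1 HKA) as EA. pose proof (proj1 HKB) as EB. pose proof (proj1 HKC) as EC.
  pose proof (proj1 HP) as EP. pose proof (proj1 HKP) as EKP.
  destruct (pb_lift HKC (a:=f ∘ ka0) (b:=f ∘ ka1)) as [fK [F0 F1]].
  { crw Hf. crw EA. reflexivity. }
  destruct (pb_lift HKC (a:=g ∘ kb0) (b:=g ∘ kb1)) as [gK [G0 G1]].
  { crw Hg. crw EB. reflexivity. }
  destruct (pb_lift HKA (a:=p2 ∘ q0) (b:=p2 ∘ q1)) as [p2K [P20 P21]].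
  { raH EKP. ra. exact EKP. }
  destruct (pb_lift HKB (a:=p1 ∘ q0) (b:=p1 ∘ q1)) as [p1K [P10 P11]].
  { crwb Hg. crwb EP. crw Hf. raH EKP. exact EKP. }
  assert (Hfs : fK ∘ dA = dC ∘ f).
  { apply (pb_unique HKC); [crw F0; crw DA0; crw DC0; reflexivity | crw F1; crw DA1; crw DC1; reflexivity]. }
  assert (Hgs : gK ∘ dB = dC ∘ g).
  { apply (pb_unique HKC); [crw G0; crw DB0; crw DC0; reflexivity | crw G1; crw DB1; crw DC1; reflexivity]. }
  assert (Hp2s : p2K ∘ s = dA ∘ p2).
  { apply (pb_unique HKA); [crw P20; crw Hs0; crw DA0; reflexivity | crw P21; crw Hs1; crw DA1; reflexivity]. }
  assert (Hp1s : p1K ∘ s = dB ∘ p1).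
  { apply (pb_unique HKB); [crw P10; crw Hs0; crw DB0; reflexivity | crw P11; crw Hs1; crw DB1; reflexivity]. }
  pose (PA := Build_pt_ob (ptf:=ka0) (pts:=dA) DA0).
  pose (PB := Build_pt_ob (ptf:=kb0) (pts:=dB) DB0).
  pose (PC := Build_pt_ob (ptf:=kc0) (pts:=dC) DC0).
  pose (PD := Build_pt_ob (ptf:=q0) (pts:=s) Hs0).
  pose (al := @Build_pt_hom E PA PC fK f F0 Hfs).
  pose (be := @Build_pt_hom E PB PC gK g G0 Hgs).
  pose (da := @Build_pt_hom E PD PA p2K p2 P20 Hp2s).
  pose (db := @Build_pt_hom E PD PB p1K p1 P10 Hp1s).
  change (SigmaPt Sigma PD).
  apply (ptpb HPC (al:=al) (be:=be) (da:=da) (db:=db)); try assumption; simpl.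
  split.
  - apply (pb_unique HKC).
    + crw F0. crw P20. crw G0. crw P10. crw EP. reflexivity.
    + crw F1. crw P21. crw G1. crw P11. crw EP. reflexivity.
  - intros T u v Ev.
    destruct (pb_lift HP (a:=kb0 ∘ u) (b:=ka0 ∘ v)) as [e0 [E01 E02]].
    { crw (eq_sym F0). rewrite Ev. crw G0. reflexivity. }
    destruct (pb_lift HP (a:=kb1 ∘ u) (b:=ka1 ∘ v)) as [e1 [E11 E12]].
    { crw (eq_sym F1). rewrite Ev. crw G1. reflexivity. }
    destruct (pb_lift HKP (a:=e0) (b:=e1)) as [w [W0 W1]].
    { ra. rewrite E12, E02. crw EA. reflexivity. }
    exists w. split; [split|].
    + apply (pb_unique HKB); [crw P10; crw W0; exact E01 | crw P11; crw W1; exact E11].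
    + apply (pb_unique HKA); [crw P20; crw W0; exact E02 | crw P21; crw W1; exact E12].
    + intros w' Hw1 Hw2. apply (pb_unique HKP).
      * rewrite W0. apply (pb_unique HP).
        -- rewrite E01, <- Hw1. crwb P10. reflexivity.
        -- rewrite E02, <- Hw2. crwb P20. reflexivity.
      * rewrite W1. apply (pb_unique HP).
        -- rewrite E11, <- Hw1. crwb P11. reflexivity.
        -- rewrite E12, <- Hw2. crwb P21. reflexivity.
Qed.


Lemma sp_id (E : Category) (Sigma : split_class E) (HPC : point_congruous Sigma) (Y : E) :
  Sigma_special Sigma (1_Y).
Proof.
  intros K k0 k1 HK d D0 D1.
  split; [intros T u v E0 E1; exact (pb_unique HK E0 E1)|].
  split; [exact D0|]. split; [exact D1|].
  destruct HPC as [[Hiso _] _]. apply Hiso; [exact D0|].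
  exists d. split; [|exact D0].
  pose proof (proj1 HK) as EK. raH EK.
  apply (pb_unique HK); [crw D0; reflexivity | crw D1; symmetry; exact EK].
Qed.

Lemma rel_sigma (E : Category) (Sigma : split_class E) (HC : finitely_complete E)
  (HPC : point_congruous Sigma)
  {X R Y : E} (x : Hom X Y) (rr : Hom R Y) (d0 : Hom R X) (s0 : Hom X R) :
  Sigma_special Sigma x -> Sigma_special Sigma rr -> x ∘ d0 = rr -> d0 ∘ s0 = 1_X ->
  Sigma _ _ d0 s0.
Proof.
  intros SX SR Hd Hs.
  destruct (kp_exists HC rr) as [KR [kr0 [kr1 [dR [HKR [DR0 DR1]]]]]].
  destruct (kp_exists HC x) as [KX [kx0 [kx1 [dX [HKX [DX0 DX1]]]]]].
  pose proof (sp_kp SR HKR DR0 DR1) as SgR.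
  pose proof (sp_kp SX HKX DX0 DX1) as SgX.
  pose proof (proj1 HKR) as ER. pose proof (proj1 HKX) as EX.
  assert (Hrs : rr ∘ s0 = x). { rewrite <- Hd. crw Hs. reflexivity. }
  destruct (pb_exists HC kr0 s0) as [A [a1 [a2 HA]]].
  pose proof (proj1 HA) as EA.
  destruct (pb_lift HA (a:=1_X) (b:=dR ∘ s0)) as [sg [SG1 SG2]].
  { crw DR0. reflexivity. }
  assert (SgA : Sigma _ _ a1 sg).
  { destruct HPC as [[_ Hpb] _]. exact (Hpb _ _ _ _ SgR _ _ _ _ _ HA sg SG1 SG2). }
  destruct (pb_lift HKX (a:=a1) (b:=d0 ∘ kr1 ∘ a2)) as [ax [AX0 AX1]].
  { crw Hd. crw ER. crw EA. crw Hrs. reflexivity. }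
  destruct (pb_lift HKR (a:=s0 ∘ d0) (b:=1_R)) as [ka [KA0 KA1]].
  { crw Hrs. rewrite Hd. reflexivity. }
  destruct (pb_lift HA (a:=d0) (b:=ka)) as [dl [DL1 DL2]].
  { exact KA0. }
  assert (Hf1 : kx0 ∘ ax = 1_X ∘ a1). { ra. exact AX0. }
  assert (Hs1 : ax ∘ sg = dX ∘ 1_X).
  { ra. apply (pb_unique HKX).
    - crw AX0. rewrite SG1. rewrite DX0. reflexivity.
    - crw AX1. crw SG2. crw DR1. rewrite Hs, DX1. reflexivity. }
  assert (Hf2 : kx0 ∘ dX = 1_X ∘ 1_X). { ra. exact DX0. }
  assert (Hs2 : dX ∘ 1_X = dX ∘ 1_X). { reflexivity. }
  assert (Hf3 : a1 ∘ dl = 1_X ∘ d0). { ra. exact DL1. }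
  assert (Hs3 : dl ∘ s0 = sg ∘ 1_X).
  { ra. apply (pb_unique HA).
    - crw DL1. rewrite Hs, SG1. reflexivity.
    - crw DL2. rewrite SG2. apply (pb_unique HKR).
      + crw KA0. crw Hs. crw DR0. reflexivity.
      + crw KA1. crw DR1. reflexivity. }
  assert (Hf4 : 1_X ∘ d0 = 1_X ∘ d0). { reflexivity. }
  assert (Hs4 : d0 ∘ s0 = 1_X ∘ 1_X). { ra. exact Hs. }
  pose (PA := Build_pt_ob (ptf:=a1) (pts:=sg) SG1).
  pose (PI := Build_pt_ob (ptf:=1_X) (pts:=1_X) (comp_id_l (1_X))).
  pose (PK := Build_pt_ob (ptf:=kx0) (pts:=dX) DX0).
  pose (PD := Build_pt_ob (ptf:=d0) (pts:=s0) Hs).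
  pose (al := @Build_pt_hom E PA PK ax (1_X) Hf1 Hs1).
  pose (be := @Build_pt_hom E PI PK dX (1_X) Hf2 Hs2).
  pose (da := @Build_pt_hom E PD PA dl (1_X) Hf3 Hs3).
  pose (db := @Build_pt_hom E PD PI d0 (1_X) Hf4 Hs4).
  change (SigmaPt Sigma PD).
  apply (ptpb HPC (al:=al) (be:=be) (da:=da) (db:=db)); simpl.
  - exact SgA.
  - destruct HPC as [[Hiso _] _]. apply Hiso; [apply comp_id_l|].
    exists (1_X); split; apply comp_id_l.
  - exact SgX.
  - split.
    + apply (pb_unique HKX).
      * crw AX0. rewrite DL1. crw DX0. reflexivity.
      * crw AX1. crw DL2. crw KA1. crw DX1. reflexivity.
    + intros T u v Ev.
      assert (V0 : a1 ∘ v = u). { rewrite <- AX0. crw Ev. crw DX0. reflexivity. }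
      assert (V1 : d0 ∘ (kr1 ∘ (a2 ∘ v)) = u).
      { pose proof (f_equal (fun z => kx1 ∘ z) Ev) as Z. simpl in Z. raH Z.
        rewrite !comp_assoc, <- AX1. ra. rewrite Z. crw DX1. reflexivity. }
      exists (kr1 ∘ (a2 ∘ v)). split; [split|].
      * exact V1.
      * apply (pb_unique HA).
        -- crw DL1. rewrite V1, V0. reflexivity.
        -- crw DL2. apply (pb_unique HKR).
           ++ crw KA0. rewrite V1. crw EA. rewrite V0. reflexivity.
           ++ crw KA1. reflexivity.
    * intros w' W1 W2. rewrite <- W2. crw DL2. crw KA1. reflexivity.
  - apply pb_id.
Qed.


Lemma trans_E (E : Category) (Sigma : split_class E) (HC : finitely_complete E)
  (HM : Sigma_Maltsev Sigma) {R X : E} (d0 d1 : Hom R X) (s0 : Hom X R) :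
  Sigma _ _ d0 s0 -> d0 ∘ s0 = 1_X -> d1 ∘ s0 = 1_X -> jointly_monic d0 d1 ->
  forall T (r1 r2 : Hom T R), d1 ∘ r1 = d0 ∘ r2 ->
  exists r3, d0 ∘ r3 = d0 ∘ r1 /\ d1 ∘ r3 = d1 ∘ r2.
Proof.
  intros Sg H0 H1 JM T r1 r2 Er.
  destruct (pb_exists HC d0 d1) as [P [p1 [p2 HP]]].
  pose proof (proj1 HP) as EP.
  destruct (pb_lift HP (a:=1_R) (b:=s0 ∘ d1)) as [sp [SP1 SP2]].
  { crw H0. reflexivity. }
  destruct (pb_lift HP (a:=s0 ∘ d0) (b:=1_R)) as [tb [TB1 TB2]].
  { crw H1. reflexivity. }
  pose proof (HM _ _ d0 s0 Sg _ d1 s0 H1 _ p1 p2 HP sp tb SP1 SP2 TB1 TB2) as JE.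
  destruct (dpb_exists HC (d0 ∘ p1) (d1 ∘ p2) d0 d1) as [M [m [mq [M0 [M1 HMu]]]]].
  assert (Mono : is_mono m).
  { intros Z u v Euv.
    assert (Q : mq ∘ u = mq ∘ v).
    { apply JM.
      - rewrite !comp_assoc, <- M0. ra. rewrite Euv. reflexivity.
      - rewrite !comp_assoc, <- M1. ra. rewrite Euv. reflexivity. }
    destruct (HMu Z (m ∘ u) (mq ∘ u)) as [w [_ Hw]].
    { rewrite !comp_assoc, M0; reflexivity. }
    { rewrite !comp_assoc, M1; reflexivity. }
    rewrite (Hw u eq_refl eq_refl), (Hw v (eq_sym Euv) (eq_sym Q)). reflexivity. }
  destruct (HMu R sp (1_R)) as [u' [[U1 _] _]].
  { crw SP1. reflexivity. }
  { crw SP2. crw H1. reflexivity. }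
  destruct (HMu R tb (1_R)) as [v' [[V1 _] _]].
  { crw TB1. crw H0. reflexivity. }
  { crw TB2. reflexivity. }
  destruct (JE M m Mono u' v' U1 V1) as [mi [MI1 MI2]].
  destruct (pb_lift HP (a:=r1) (b:=r2)) as [pp [PP1 PP2]].
  { symmetry; exact Er. }
  exists (mq ∘ (mi ∘ pp)). split.
  - rewrite !comp_assoc, <- M0. ra. rewrite (cmp_r MI2). ra. rewrite PP1. reflexivity.
  - rewrite !comp_assoc, <- M1. ra. rewrite (cmp_r MI2). ra. rewrite PP2. reflexivity.
Qed.


Lemma main_E (E : Category) (Sigma : split_class E) (HC : finitely_complete E)
  (HPC : point_congruous Sigma) (HM : Sigma_Maltsev Sigma)
  {R X Y : E} (rr : Hom R Y) (x : Hom X Y) (D0 D1 : Hom R X) (S0 : Hom X R) :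
  Sigma_special Sigma x -> Sigma_special Sigma rr -> x ∘ D0 = rr -> x ∘ D1 = rr ->
  D0 ∘ S0 = 1_X -> D1 ∘ S0 = 1_X -> jointly_monic D0 D1 ->
  (forall T (r1 r2 : Hom T R), D1 ∘ r1 = D0 ∘ r2 ->
     exists r3, D0 ∘ r3 = D0 ∘ r1 /\ D1 ∘ r3 = D1 ∘ r2) /\
  (forall T (r : Hom T R), exists r', D0 ∘ r' = D1 ∘ r /\ D1 ∘ r' = D0 ∘ r).
Proof.
  intros SX SR Hd0 Hd1 Hs0 Hs1 JM.
  assert (Sg : Sigma _ _ D0 S0) by exact (rel_sigma HC HPC SX SR Hd0 Hs0).
  assert (Tr := trans_E HC HM Sg Hs0 Hs1 JM).
  split; [exact Tr|].
  assert (Hrs : rr ∘ S0 = x). { rewrite <- Hd0. crw Hs0. reflexivity. }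
  destruct (kp_exists HC x) as [KX [kx0 [kx1 [dX [HKX [DX0 DX1]]]]]].
  destruct (kp_exists HC rr) as [KR [kr0 [kr1 [dR [HKR [DR0 DR1]]]]]].
  pose proof (proj1 HKX) as EX. pose proof (proj1 HKR) as ER.
  assert (SKX : Sigma_special Sigma (x ∘ kx1)).
  { exact (sp_pullback HC HPC (c:=1_Y) SX SX (sp_id (Y:=Y) HPC) (comp_id_l x) (comp_id_l x) HKX). }
  assert (SKR : Sigma_special Sigma (rr ∘ kr1)).
  { exact (sp_pullback HC HPC (c:=1_Y) SR SR (sp_id (Y:=Y) HPC) (comp_id_l rr) (comp_id_l rr) HKR). }
  destruct (pb_lift HKX (a:=D0) (b:=D1)) as [rho [RH0 RH1]].
  { rewrite Hd0, Hd1. reflexivity. }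
  destruct (pb_lift HKX (a:=D0 ∘ kr0) (b:=D1 ∘ kr1)) as [om [OM0 OM1]].
  { crw Hd0. crw Hd1. exact ER. }
  destruct (pb_exists HC om rho) as [S [sq [sw HS]]].
  pose proof (proj1 HS) as ES.
  destruct (pb_lift HS (a:=1_R) (b:=dR)) as [sg [SG1 SG2]].
  { apply (pb_unique HKX); [crw OM0; crw DR0; crw RH0; reflexivity
                           | crw OM1; crw DR1; crw RH1; reflexivity]. }
  assert (SS : Sigma_special Sigma ((rr ∘ kr1) ∘ sw)).
  { assert (H1 : (x ∘ kx1) ∘ om = rr ∘ kr1). { crw OM1. crw Hd1. reflexivity. }
    assert (H2 : (x ∘ kx1) ∘ rho = rr). { crw RH1. exact Hd1. }
    exact (sp_pullback HC HPC SKR SR SKX H1 H2 HS). }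
  assert (SgS : Sigma _ _ (kr0 ∘ sw) sg).
  { apply (rel_sigma HC HPC SR SS).
    - ra. crw ER. reflexivity.
    - crw SG2. exact DR0. }
  assert (JMS : jointly_monic (kr0 ∘ sw) (kr1 ∘ sw)).
  { intros T a b Ea Eb. raH Ea. raH Eb.
    assert (Hw : sw ∘ a = sw ∘ b) by exact (pb_unique HKR Ea Eb).
    apply (pb_unique HS); [|exact Hw].
    apply JM.
    - crwb RH0. crwb ES. rewrite Hw. reflexivity.
    - crwb RH1. crwb ES. rewrite Hw. reflexivity. }
  assert (Q0 : (kr0 ∘ sw) ∘ sg = 1_R). { crw SG2. exact DR0. }
  assert (Q1 : (kr1 ∘ sw) ∘ sg = 1_R). { crw SG2. exact DR1. }
  assert (TrS := trans_E HC HM SgS Q0 Q1 JMS).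
  intros T r.
  destruct (pb_lift HKR (a:=S0 ∘ D1 ∘ r) (b:=r)) as [w1 [W10 W11]].
  { crw Hrs. rewrite <- Hd1. ra. reflexivity. }
  destruct (pb_lift HKR (a:=r) (b:=S0 ∘ D0 ∘ r)) as [w2 [W20 W21]].
  { crw Hrs. rewrite <- Hd0. ra. reflexivity. }
  raH W10. raH W21.
  destruct (pb_lift HS (a:=S0 ∘ D1 ∘ r) (b:=w1)) as [e1 [E11 E12]].
  { apply (pb_unique HKX).
    - crw OM0. rewrite W10. crw RH0. reflexivity.
    - crw OM1. rewrite W11. crw RH1. crw Hs1. reflexivity. }
  destruct (pb_lift HS (a:=S0 ∘ D0 ∘ r) (b:=w2)) as [e2 [E21 E22]].
  { apply (pb_unique HKX).
    - crw OM0. rewrite W20. crw RH0. crw Hs0. reflexivity.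
    - crw OM1. rewrite W21. crw RH1. reflexivity. }
  destruct (TrS T e1 e2) as [e3 [F0 F1]].
  { crw E12. crw E22. rewrite W11, W20. reflexivity. }
  raH F0. raH F1. rewrite E12, W10 in F0. rewrite E22, W21 in F1.
  exists (sq ∘ e3). split.
  - crwb RH0. crwb ES. crw OM0. rewrite F0. crw Hs0. reflexivity.
  - crwb RH1. crwb ES. crw OM1. rewrite F1. crw Hs1. reflexivity.
Qed.


Unset Implicit Arguments.
Theorem theorem6p5 (E : Category) (Sigma : split_class E) :
  finitely_complete E ->
  is_class_of_split_epis Sigma ->
  point_congruous Sigma ->
  Sigma_Maltsev Sigma ->
  forall Y : E, Maltsev (SigmaSpecialSlice Sigma Y).
Proof.
  intros HC _ HPC HM Y Ro Xo d0 d1 Hrel Hrefl.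
  destruct Ro as [[R rr] SR]. destruct Xo as [[X x] SX].
  simpl in SR, SX.
  destruct d0 as [D0 Hd0]. destruct d1 as [D1 Hd1]. simpl in D0, D1.
  change (x ∘ D0 = rr) in Hd0. change (x ∘ D1 = rr) in Hd1.
  destruct Hrefl as [s0 [E0 E1]].
  pose proof (f_equal (@sl_map _ _ _ _) E0) as Hs0. pose proof (f_equal (@sl_map _ _ _ _) E1) as Hs1.
  simpl in Hs0, Hs1. change (D0 ∘ sl_map s0 = 1_X) in Hs0. change (D1 ∘ sl_map s0 = 1_X) in Hs1.
  assert (JM : jointly_monic D0 D1).
  { destruct (kp_exists HC x) as [KX [kx0 [kx1 [dX [HKX [DX0 DX1]]]]]].
    destruct (pb_lift HKX (a:=D0) (b:=D1)) as [rho [RH0 RH1]].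
    { rewrite Hd0, Hd1. reflexivity. }
    assert (SKX : Sigma_special Sigma (x ∘ kx1)).
    { exact (sp_pullback HC HPC (c:=1_Y) SX SX (sp_id (Y:=Y) HPC) (comp_id_l x) (comp_id_l x) HKX). }
    destruct (pb_exists HC rho rho) as [Q [q0 [q1 HQ]]].
    assert (H2 : (x ∘ kx1) ∘ rho = rr). { crw RH1. exact Hd1. }
    pose proof (sp_pullback HC HPC SR SR SKX H2 H2 HQ) as SQ.
    assert (Cq : rr ∘ q0 = rr ∘ q1).
    { rewrite <- H2. ra. pose proof (proj1 HQ) as EQ. raH EQ. crw EQ. reflexivity. }
    pose (Qo := exist (fun A : sl_ob (C:=E) Y => Sigma_special Sigma (projT2 A))
                  (existT _ Q (rr ∘ q1)) SQ).
    pose (h0 := @Build_sl_hom E Y (existT _ Q (rr ∘ q1)) (existT _ R rr) q0 Cq).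
    pose (h1 := @Build_sl_hom E Y (existT _ Q (rr ∘ q1)) (existT _ R rr) q1 eq_refl).
    assert (Hh : h0 = h1).
    { apply (Hrel Qo h0 h1); apply sl_hom_eq; simpl.
      - rewrite <- RH0. ra. pose proof (proj1 HQ) as EQ. raH EQ. rewrite EQ. reflexivity.
      - rewrite <- RH1. ra. pose proof (proj1 HQ) as EQ. raH EQ. rewrite EQ. reflexivity. }
    pose proof (f_equal (@sl_map _ _ _ _) Hh) as Hq. simpl in Hq.
    intros T a b Ea Eb.
    destruct (pb_lift HQ (a:=a) (b:=b)) as [cc [C0 C1]].
    { apply (pb_unique HKX); [crw RH0; symmetry; exact Ea | crw RH1; symmetry; exact Eb]. }
    rewrite <- C0, <- C1, Hq. reflexivity. }
  destruct (main_E HC HPC HM SX SR Hd0 Hd1 Hs0 Hs1 JM) as [Tr Sy].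
  split; [|split].
  - exists s0. split; assumption.
  - intros [[T t] ST] [r Hr]. simpl in r, Hr.
    destruct (Sy T r) as [r' [F0 F1]].
    assert (Hr' : rr ∘ r' = t).
    { rewrite <- Hd0. crw F0. crw Hd1. exact Hr. }
    exists (@Build_sl_hom E Y (existT _ T t) (existT _ R rr) r' Hr').
    split; apply sl_hom_eq; simpl; assumption.
  - intros [[T t] ST] [r1 Hr1] [r2 Hr2] Er. simpl in r1, Hr1, r2, Hr2.
    pose proof (f_equal (@sl_map _ _ _ _) Er) as Er'. simpl in Er'.
    destruct (Tr T r1 r2 Er') as [r3 [F0 F1]].
    assert (Hr3 : rr ∘ r3 = t).
    { rewrite <- Hd0. crw F0. crw Hd0. exact Hr1. }
    exists (@Build_sl_hom E Y (existT _ T t) (existT _ R rr) r3 Hr3).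
    split; apply sl_hom_eq; simpl; assumption.
Qed.
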